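(* Let $b\geq 1$ be odd, let $n,k$ be positive integers with $k\leq n-2$, and let $\mathbf{s}=s_1\ldots s_k$ be an integer sequence such that the set $\mathbf{s}\,|\,R_n(b)$ is nonempty. Let $\mathbf{t}$ be the $\prec$-last sequence in $\mathbf{s}\,|\,R_n(b)$, and let $M=\min\{b,\max\{s_i\}_{i=1}^k+1\}$. Then: (1) if $\sum_{i=1}^k s_i$ is even and $M$ is odd, then $\mathbf{t}=\mathbf{s}M0\ldots0$; (2) if $\sum_{i=1}^k s_i$ is even and $M$ is even, then $\mathbf{t}=\mathbf{s}M(M+1)0\ldots0$; (3) if $\sum_{i=1}^k s_i$ is odd, then $\mathbf{t}=\mathbf{s}0\ldots0$. (In each case the trailing zeros fill the sequence up to length $n$.)
   Context: A restricted growth function of length $n$ is an integer sequence $s_1\ldots s_n$ with $s_1=0$ and $0\leq s_{i+1}\leq \max\{s_j\}_{j=1}^i+1$ for $1\leq i\leq n-1$; $R_n$ is the set of these. For an integer $b\geq1$, $R_n(b)=\{s_1\ldots s_n\in R_n: \max_i s_i\leq b\}$. For a sequence $\mathbf{u}$ and a set $S$ of sequences, $\mathbf{u}\,|\,S$ denotes the subset of $S$ of sequences having prefix $\mathbf{u}$. The Reflected Gray Code Order $\prec$ on length-$n$ sequences of nonnegative integers: $s_1\ldots s_n\prec t_1\ldots t_n$ if, for the smallest $k$ with $s_k\neq t_k$, either $\sum_{i=1}^{k-1}s_i$ is even and $s_k<t_k$, or $\sum_{i=1}^{k-1}s_i$ is odd and $s_k>t_k$. The $\prec$-last sequence of a set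 is its largest element with respect to $\prec$. *)

(* Defs.v *)
(* Sequences are seq nat, indexed from 0 (s_1 = nth 0 s 0). *)
From mathcomp Require Import all_boot.
Set Implicit Arguments. Unset Strict Implicit. Unset Printing Implicit Defensive.

Fixpoint rgf_aux (m : nat) (s : seq nat) : bool :=
  match s with
  | [::] => true
  | x :: s' => (x <= m.+1) && rgf_aux (maxn m x) s'
  end.

(* restricted growth function: s_1 = 0 and s_{i+1} <= max_{j<=i} s_j + 1 *)
Definition is_rgf (s : seq nat) : bool :=
  match s with
  | [::] => true
  | x :: s' => (x == 0) && rgf_aux 0 s'
  end.

Definition in_Rnb (n b : nat) (s : seq nat) : bool :=
  [&& size s == n, is_rgf s & all (fun x => x <= b) s].

Definition in_prefix_Rnb (u : seq nat) (n b : nat) (s : seq nat) : bool :=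
  prefix u s && in_Rnb n b s.

Definition rgc_lt (s t : seq nat) : Prop :=
  size s = size t /\
  exists k, [/\ k < size s, take k s = take k t, nth 0 s k != nth 0 t k &
     if ~~ odd (sumn (take k s)) then nth 0 s k < nth 0 t k
     else nth 0 t k < nth 0 s k].

Definition rgc_last (P : seq nat -> bool) (t : seq nat) : Prop :=
  P t /\ forall u, P u -> u <> t -> rgc_lt u t.

(* Main.v *)
Require Import Defs.
From mathcomp Require Import all_boot zify.
Lemma rgf_aux_cat m a c : rgf_aux m (a ++ c) = rgf_aux m a && rgf_aux (foldl maxn m a) c.
Proof. by elim: a m => [|x a IH] m //=; rewrite IH andbA. Qed.
Lemma foldl_max m a : foldl maxn m a = maxn m (\max_(x <- a) x).
Proof.
elim: a m => [|x a IH] m /=; first by rewrite big_nil maxn0.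
by rewrite IH big_cons maxnA.
Qed.
Lemma is_rgf_cat s r : 0 < size s ->
  is_rgf (s ++ r) = is_rgf s && rgf_aux (\max_(x <- s) x) r.
Proof.
case: s => [|x s] //= _; case: (x =P 0) => [->|] //=.
by rewrite rgf_aux_cat foldl_max big_cons !max0n.
Qed.
Lemma nseq0_facts i m : sumn (take i (nseq m 0)) = 0 /\ nth 0 (nseq m 0) i = 0.
Proof. rewrite nth_nseq if_same; split => //; elim: m i => [|m IH] [|i] //=; exact: IH. Qed.
Lemma rgf_nseq m p : rgf_aux m (nseq p 0).
Proof. by elim: p m => //= p IH m; rewrite IH. Qed.
Lemma prefix_split (s t : seq nat) : prefix s t -> t = s ++ drop (size s) t.
Proof. by rewrite prefixE => /eqP {1}<-; rewrite cat_take_drop. Qed.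

Lemma main_gen b n s t r0 : 0 < size s -> rgc_last (in_prefix_Rnb s n b) t ->
  in_prefix_Rnb s n b (s ++ r0) ->
  (forall r, size r = size r0 -> rgf_aux (\max_(x <- s) x) r -> all (fun x => x <= b) r ->
    forall i, i < size r0 -> take i r0 = take i r -> nth 0 r0 i != nth 0 r i ->
    (if ~~ odd (sumn s + sumn (take i r0)) then nth 0 r0 i < nth 0 r i
     else nth 0 r i < nth 0 r0 i) -> False) -> t = s ++ r0.
Proof.
move=> s0 [Ht Hl] H0 Hk.
case: (eqVneq t (s ++ r0)) => // hne.
have [_ [j [hj htk hnth hc]]] := Hl _ H0 (nesym (elimN eqP hne)).
move: Ht H0 => /andP [/prefix_split ht /and3P [/eqP sz rg al]].
move=> /andP [_ /and3P [/eqP sz0 _ _]].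
move: ht sz rg al htk hnth hc hne; set r := drop _ t => -> sz rg al htk hnth hc hne.
rewrite is_rgf_cat // in rg; move/andP: rg => [_ rg].
rewrite all_cat in al; move/andP: al => [_ al].
rewrite !size_cat in sz sz0 hj.
have szr : size r = size r0 by lia.
case: (ltnP j (size s)) => hjs.
  by move: hnth; rewrite !nth_cat hjs eqxx.
have [i hi] : exists i, j = size s + i by exists (j - size s); lia.
subst j.
move: htk hnth hc; rewrite !take_cat !nth_cat ltnNge leq_addr /= addKn sumn_cat.
move=> /eqP; rewrite eqseq_cat // => /andP [_ /eqP htk] hnth hc.
exfalso; apply: (Hk r szr rg al i) => //; lia.
Qed.

Lemma max_le b (s : seq nat) : all (fun x => x <= b) s -> \max_(x <- s) x <= b.
Proof.
elim: s => [|x s IH]; rewrite ?big_nil ?big_cons //= geq_max.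
by case/andP => -> /IH.
Qed.

Lemma mem_cand b n s r0 : 0 < size s -> is_rgf s -> all (fun x => x <= b) s ->
  size s + size r0 = n -> rgf_aux (\max_(x <- s) x) r0 -> all (fun x => x <= b) r0 ->
  in_prefix_Rnb s n b (s ++ r0).
Proof.
move=> s0 rs als sz rg al.
by rewrite /in_prefix_Rnb /in_Rnb prefixE take_size_cat // eqxx size_cat sz eqxx
  is_rgf_cat // rs rg all_cat als al.
Qed.

Theorem proposition1 (b n k : nat) (s t : seq nat) :
  0 < b -> odd b -> 0 < k -> k + 2 <= n -> size s = k ->
  (exists u, in_prefix_Rnb s n b u) ->
  rgc_last (in_prefix_Rnb s n b) t ->
  let M := minn b (\max_(x <- s) x).+1 in
  [/\ (~~ odd (sumn s) -> odd M -> t = s ++ M :: nseq (n - k - 1) 0),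
      (~~ odd (sumn s) -> ~~ odd M -> t = s ++ M :: M.+1 :: nseq (n - k - 2) 0)
    & (odd (sumn s) -> t = s ++ nseq (n - k) 0)].
Proof.
move=> b0 ob k0 kn sk [u Hu] Hlast M.
have /andP [/prefix_split hu /and3P [_ rgu alu]] := Hu.
rewrite hu is_rgf_cat ?sk // in rgu; rewrite hu all_cat in alu.
move/andP: rgu => [rgs _]; move/andP: alu => [als _].
have s0 : 0 < size s by rewrite sk.
set mx := \max_(x <- s) x in M *.
have mxb : mx <= b by apply: max_le.
have M1 : M <= mx.+1 by rewrite /M geq_minr.
have M2 : M <= b by rewrite /M geq_minl.
split.
- move=> ev oM; apply: (main_gen _ _ _ _ _ s0 Hlast).
    apply: mem_cand => //=; rewrite ?size_nseq ?M1 ?M2 ?rgf_nseq ?all_nseq ?orbT //; lia.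
  move=> r szr rg al [|i] hi htk hnth hc.
    move: r szr rg al htk hnth hc => [|y r'] //= _ /andP[hy _] /andP[hyb _] _ _.
    rewrite addn0 ev => hc.
    have : y <= M by rewrite /M leq_min hy hyb.
    lia.
  move: hc => /=; have [-> ->] := nseq0_facts i (n - k - 1).
  by rewrite addn0 oddD (negbTE ev) oM.
- move=> ev eM.
  have hM : M = mx.+1.
    case: (leqP b mx.+1) => h; last by rewrite /M (minn_idPr (ltnW h)).
    by move: eM; rewrite /M (minn_idPl h) ob.
  have hMb : M < b.
    move: M2; rewrite leq_eqVlt; case/orP => // /eqP e.
    by move: eM; rewrite e ob.
  apply: (main_gen _ _ _ _ _ s0 Hlast).
    apply: mem_cand => //=; rewrite ?size_nseq ?M1 ?M2 ?rgf_nseq ?all_nseq ?orbT ?hMb //=;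
     rewrite ?hM ?maxnSS ?maxnn ?leqnn //=; lia.
  move=> r szr rg al [|[|i]] hi htk hnth hc.
  + move: r szr rg al htk hnth hc => [|y r'] //= _ /andP[hy _] /andP[hyb _] _ _.
    rewrite addn0 (negbTE ev) => hc.
    have : y <= M by rewrite /M leq_min hy hyb.
    move: hc => /= hc; lia.
  + move: r szr rg al htk hnth hc => [|y [|z r']] //= _ /andP[hy /andP [hz _]] _ [ey] _; subst y.
    rewrite addn0 oddD (negbTE ev) (negbTE eM) /= => hc.
    move: hz; rewrite -/mx; lia.
  + move: hc => /=; have [-> ->] := nseq0_facts i (n - k - 2).
    by rewrite addn0 !oddD (negbTE ev) oddS (negbTE eM) /= ltn0.
- move=> od; apply: (main_gen _ _ _ _ _ s0 Hlast).
    apply: mem_cand => //=; rewrite ?size_nseq ?rgf_nseq ?all_nseq ?orbT //; lia.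
  move=> r szr rg al i hi htk hnth.
  have [-> ->] := nseq0_facts i (n - k).
  by rewrite addn0 od.
Qed.
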